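(* For any program $\Omega$ with weight constraints, the map $Z\mapsto Z\setminus Q_\Omega$ is a one-to-one correspondence between the answer sets of the nonnested translation $[\Omega]^{nn}$ and the answer sets of $\Omega$, where $Q_\Omega$ is the set of all new atoms (negation atoms and weight atoms) occurring in $[\Omega]^{nn}$.
   Context: Programs with nested expressions. A literal is a propositional atom $a$ or its classical negation $\neg a$; a set of literals is consistent if it contains no pair $a,\neg a$. Elementary formulas are literals, $\bot$ and $\top$. Formulas are built from elementary formulas using the unary connective $\mathit{not}$ (negation as failure) and the binary connectives '','' (conjunction) and '';'' (disjunction). A rule with nested expressions has the form $\mathit{Head}\leftarrow \mathit{Body}$ where $\mathit{Head},\mathit{Body}$ are formulas (a formula $F$ alone stands for $F\leftarrow\top$); a program with nested expressions is a set of such rules. For a consistent set $Z$ of literals: $Z\models l$ iff $l\in Z$ for a literal $l$; $Z\models\top$; $Z\not\models\bot$; $Z\models(F,G)$ iff $Z\models F$ and $Z\models G$; $Z\models(F;G)$ iff $Z\models F$ or $Z\models G$; $Z\models \mathit{not}\,F$ iff $Z\not\models F$. $Z$ satisfies a program if for every rule, $Z\models\mathit{Body}$ implies $Z\models\mathit{Head}$. The reduct $F^Z$: $F^Z=F$ for elementary $F$; $(F,G)^Z=F^Z,G^Z$; $(F;G)^Z=F^Z;G^Z$; $(\mathit{not}\,F)^Z=\bot$ if $Z\models F$ and $\top$ otherwise. $\Pi^Z$ is the set of rules $\mathit{Head}^Z\leftarrow\mathit{Body}^Z$ for the rules of $\Pi$. A consistent set $Z$ is an answer set of a program without $\mathit{not}$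 if it is a minimal (under inclusion) consistent set of literals satisfying it; $Z$ is an answer set of an arbitrary program $\Pi$ if $Z$ is an answer set of $\Pi^Z$. A nonnested rule is one whose head is a literal or $\bot$ and whose body is a conjunction of literals, each possibly prefixed with $\mathit{not}$. Programs with weight constraints. A rule element is a literal $l$ (positive) or $\mathit{not}\ l$ (negative); $Z\models c$ for a rule element is as for formulas. A weight constraint is $L\le\{c_1=w_1,\dots,c_m=w_m\}\le U$ where $L,U$ are real numbers or $\pm\infty$, $c_1,\dots,c_m$ ($m\ge0$) are rule elements and $w_1,\dots,w_m$ are nonnegative reals. A rule with weight constraints is $C_0\leftarrow C_1,\dots,C_n$ ($n\ge0$) with weight constraints $C_i$; the rule elements of $C_0$ are its head elements. A program with weight constraints is a set of such rules. A literal $c$ is identified with the constraint $1\le\{c=1\}$. A consistent set $Z$ of literals satisfies the weight constraint above if $L\le\sum_{j:Z\models c_j}w_j\le U$, and satisfies a program $\Omega$ if for every rule, whenever $Z$ satisfies $C_1,\dots,C_n$ it satisfies $C_0$. The reduct $(L\le S)^Z$ is $L^Z\le S'$ where $S'$ is obtained from $S$ by dropping all pairs $c=w$ with $c$ negative, and $L^Z$ is $L$ minus the sum of the weights $w$ of the pairs $c=w$ in $S$ with $c$ negative and $Z\models c$. The reduct of a rule $L_0\le S_0\le U_0\leftarrow L_1\le S_1\le U_1,\dots,L_n\le S_n\le U_n$ w.r.t. $Z$ is, if $Z\models S_i\le U_i$ for all $1\le i\le n$, the set of rules $l\leftarrow (L_1\le S_1)^Z,\dots,(L_n\le S_n)^Z$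 for all positive head elements $l$ with $Z\models l$; otherwise it is empty. $\Omega^Z$ is the union of the reducts of the rules of $\Omega$; it has a unique minimal satisfying set of literals, $\mathit{cl}(\Omega^Z)$. $Z$ is an answer set of $\Omega$ if $Z\models\Omega$ and $\mathit{cl}(\Omega^Z)=Z$. Nonnested translation. For each literal $l$ there is a new atom $q_{\mathit{not}\,l}$ (negation atom), and for each real $w$ (or $\pm\infty$) and each expression $S=\{c_1=w_1,\dots,c_m=w_m\}$ there are new atoms $q_{w\le S}$ and $q_{w<S}$ (weight atoms); all new atoms are distinct and do not occur in $\Omega$. For $m>0$, $S'$ denotes $\{c_1=w_1,\dots,c_{m-1}=w_{m-1}\}$. A nonnested program $\Pi$ is closed if: for each atom $q_{w\le S}$ occurring in $\Pi$, $\Pi$ contains the rule $q_{w\le S}$ (i.e. $q_{w\le S}\leftarrow\top$) if $w\le0$, and the rules $q_{w\le S}\leftarrow q_{w\le S'}$ and $q_{w\le S}\leftarrow c_m,q_{w-w_m\le S'}$ if $0<w\le w_1+\dots+w_m$; and for each atom $q_{w<S}$ occurring in $\Pi$, $\Pi$ contains the rule $q_{w<S}$ if $w<0$, and the rules $q_{w<S}\leftarrow q_{w<S'}$ and $q_{w<S}\leftarrow c_m,q_{w-w_m<S'}$ if $0\le w<w_1+\dots+w_m$. For a weight constraint, $[L\le S\le U]^{nn}$ is the conjunction $q_{L\le S},\mathit{not}\,q_{U<S}$. $[\Omega]^{nn}$ is the smallest closed program containing, for every rule $L_0\le S_0\le U_0\leftarrow C_1,\dots,C_n$ of $\Omega$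 and each of its positive head elements $l$, the rules $q_{\mathit{not}\,l}\leftarrow\mathit{not}\,l$ and $l\leftarrow\mathit{not}\,q_{\mathit{not}\,l},[C_1]^{nn},\dots,[C_n]^{nn}$, together with the rules $\bot\leftarrow\mathit{not}\,q_{L_0\le S_0},[C_1]^{nn},\dots,[C_n]^{nn}$ and $\bot\leftarrow q_{U_0<S_0},[C_1]^{nn},\dots,[C_n]^{nn}$. *)

(* Defs.v *)
From Stdlib Require Import Reals List ClassicalEpsilon.
From Coquelicot Require Import Rbar.
Import ListNotations.
Open Scope R_scope.

Set Implicit Arguments.

(** A literal is an atom [a] or its classical negation [~a]. *)
Inductive lit (A : Type) : Type := Pos (a : A) | Neg (a : A).
Arguments Pos {A} a.
Arguments Neg {A} a.

Definition litset (A : Type) := lit A -> Prop.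

Definition consistent {A} (Z : litset A) : Prop :=
  forall a, ~ (Z (Pos a) /\ Z (Neg a)).

Inductive formula (A : Type) : Type :=
| FLit (l : lit A)
| FBot
| FTop
| FNot (F : formula A)                 (* negation as failure *)
| FAnd (F G : formula A)
| FOr (F G : formula A).
Arguments FBot {A}.
Arguments FTop {A}.

Fixpoint fsat {A} (Z : litset A) (F : formula A) : Prop :=
  match F with
  | FLit l => Z l
  | FBot => False
  | FTop => True
  | FNot G => ~ fsat Z G
  | FAnd G H => fsat Z G /\ fsat Z H
  | FOr G H => fsat Z G \/ fsat Z H
  end.

(** A rule [Head <- Body] is the pair (Head, Body). *)
Definition nrule (A : Type) := (formula A * formula A)%type.
Definition nprogram (A : Type) := nrule A -> Prop.

Definition psat {A} (Z : litset A) (P : nprogram A) : Prop :=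
  forall r, P r -> fsat Z (snd r) -> fsat Z (fst r).

Fixpoint freduct {A} (Z : litset A) (F : formula A) : formula A :=
  match F with
  | FNot G => if excluded_middle_informative (fsat Z G) then FBot else FTop
  | FAnd G H => FAnd (freduct Z G) (freduct Z H)
  | FOr G H => FOr (freduct Z G) (freduct Z H)
  | FLit l => FLit l
  | FBot => FBot
  | FTop => FTop
  end.

Definition preduct {A} (P : nprogram A) (Z : litset A) : nprogram A :=
  fun r => exists r0, P r0 /\ r = (freduct Z (fst r0), freduct Z (snd r0)).

Definition answer_set_notfree {A} (P : nprogram A) (Z : litset A) : Prop :=
  consistent Z /\ psat Z P /\
  forall Y : litset A, consistent Y -> psat Y P ->
    (forall l, Y l -> Z l) -> forall l, Z l -> Y l.

Definition answer_set {A} (P : nprogram A) (Z : litset A) : Prop :=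
  answer_set_notfree (preduct P Z) Z.

(** Rule element: [(true, l)] is the positive element [l],
    [(false, l)] is the negative element [not l]. *)
Definition relem (A : Type) := (bool * lit A)%type.

Definition esat {A} (Z : litset A) (c : relem A) : Prop :=
  if fst c then Z (snd c) else ~ Z (snd c).

(** Weight constraint  L <= {c1 = w1, ..., cm = wm} <= U. *)
Record wconstr (A : Type) := WC {
  wlo : Rbar;
  welems : list (relem A * R);
  whi : Rbar }.

Record wrule (A : Type) := WR {
  whead : wconstr A;
  wbody : list (wconstr A) }.

Definition wprogram (A : Type) := wrule A -> Prop.

Definition sumw {A} (S : list (relem A * R)) : R :=
  fold_right (fun (p : relem A * R) (acc : R) => snd p + acc) 0 S.

Definition wsum {A} (Z : litset A) (S : list (relem A * R)) : R :=
  fold_right (fun (p : relem A * R) (acc : R) =>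
    (if excluded_middle_informative (esat Z (fst p)) then snd p else 0) + acc) 0 S.

Definition wcsat {A} (Z : litset A) (C : wconstr A) : Prop :=
  Rbar_le (wlo C) (Finite (wsum Z (welems C))) /\
  Rbar_le (Finite (wsum Z (welems C))) (whi C).

Definition wpsat {A} (Z : litset A) (O : wprogram A) : Prop :=
  forall r, O r -> (forall C, In C (wbody r) -> wcsat Z C) -> wcsat Z (whead r).

Definition pos_part {A} (S : list (relem A * R)) : list (lit A * R) :=
  flat_map (fun p : relem A * R => if fst (fst p) then [(snd (fst p), snd p)] else []) S.

Definition neg_sat_sum {A} (Z : litset A) (S : list (relem A * R)) : R :=
  fold_right (fun (p : relem A * R) (acc : R) =>
    (if fst (fst p) then 0
     else if excluded_middle_informative (esat Z (fst p)) then snd p else 0)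
    + acc) 0 S.

Definition lconstr (A : Type) := (Rbar * list (lit A * R))%type.

Definition lreduct {A} (Z : litset A) (C : wconstr A) : lconstr A :=
  (Rbar_minus (wlo C) (Finite (neg_sat_sum Z (welems C))), pos_part (welems C)).

(** Rules of the reduct: [l <- (L1 <= S1)^Z, ..., (Ln <= Sn)^Z]. *)
Definition drule (A : Type) := (lit A * list (lconstr A))%type.

Definition wreduct {A} (O : wprogram A) (Z : litset A) : drule A -> Prop :=
  fun dr => exists r, O r /\
    (forall C, In C (wbody r) -> Rbar_le (Finite (wsum Z (welems C))) (whi C)) /\
    (exists w, In ((true, fst dr), w) (welems (whead r))) /\
    Z (fst dr) /\
    snd dr = map (lreduct Z) (wbody r).

Definition psum {A} (Y : litset A) (S : list (lit A * R)) : R :=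
  fold_right (fun (p : lit A * R) (acc : R) =>
    (if excluded_middle_informative (Y (fst p)) then snd p else 0) + acc) 0 S.

Definition dsat {A} (Y : litset A) (D : drule A -> Prop) : Prop :=
  forall dr, D dr ->
    (forall LC, In LC (snd dr) -> Rbar_le (fst LC) (Finite (psum Y (snd LC)))) ->
    Y (fst dr).

Definition cl {A} (O : wprogram A) (Z : litset A) : litset A :=
  fun l => forall Y : litset A, dsat Y (wreduct O Z) -> Y l.

Definition w_answer_set {A} (O : wprogram A) (Z : litset A) : Prop :=
  consistent Z /\ wpsat Z O /\ (forall l, cl O Z l <-> Z l).

(** All weights of Omega are nonnegative (part of the definition of a
    weight constraint). *)
Definition nonneg_weights {A} (O : wprogram A) : Prop :=
  forall r C p, O r -> (C = whead r \/ In C (wbody r)) -> In p (welems C) -> 0 <= snd p.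

(** Atoms of the translated program: original atoms plus the new atoms
    q_{not l}, q_{w <= S}, q_{w < S} (pairwise distinct by construction). *)
Inductive xatom (A : Type) : Type :=
| Orig (a : A)
| QNot (l : lit A)
| QLe (w : Rbar) (S : list (relem A * R))
| QLt (w : Rbar) (S : list (relem A * R)).

Definition liftl {A} (l : lit A) : lit (xatom A) :=
  match l with Pos a => Pos (Orig a) | Neg a => Neg (Orig a) end.

Definition qatom {A} (q : xatom A) : formula (xatom A) := FLit (Pos q).

Definition lift_elem {A} (c : relem A) : formula (xatom A) :=
  if fst c then FLit (liftl (snd c)) else FNot (FLit (liftl (snd c))).

Fixpoint conj {X} (l : list (formula X)) : formula X :=
  match l with
  | [] => FTop
  | [F] => F
  | F :: l' => FAnd F (conj l')
  end.

Definition constr_nn {A} (C : wconstr A) : list (formula (xatom A)) :=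
  [qatom (QLe (wlo C) (welems C)); FNot (qatom (QLt (whi C) (welems C)))].

Definition body_nn {A} (Cs : list (wconstr A)) : list (formula (xatom A)) :=
  flat_map constr_nn Cs.

Fixpoint fatom {X} (q : X) (F : formula X) : Prop :=
  match F with
  | FLit (Pos a) => a = q
  | FLit (Neg a) => a = q
  | FBot => False
  | FTop => False
  | FNot G => fatom q G
  | FAnd G H => fatom q G \/ fatom q H
  | FOr G H => fatom q G \/ fatom q H
  end.

Definition occurs {X} (q : X) (r : nrule X) : Prop := fatom q (fst r) \/ fatom q (snd r).

Inductive nn {A} (O : wprogram A) : nprogram (xatom A) :=
| nn_qnot : forall r l w, O r -> In ((true, l), w) (welems (whead r)) ->
    nn O (qatom (QNot l), FNot (FLit (liftl l)))
| nn_head : forall r l w, O r -> In ((true, l), w) (welems (whead r)) ->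
    nn O (FLit (liftl l), conj (FNot (qatom (QNot l)) :: body_nn (wbody r)))
| nn_lo : forall r, O r ->
    nn O (FBot, conj (FNot (qatom (QLe (wlo (whead r)) (welems (whead r))))
                      :: body_nn (wbody r)))
| nn_hi : forall r, O r ->
    nn O (FBot, conj (qatom (QLt (whi (whead r)) (welems (whead r)))
                      :: body_nn (wbody r)))
| nn_le_fact : forall r w S, nn O r -> occurs (QLe w S) r ->
    Rbar_le w (Finite 0) ->
    nn O (qatom (QLe w S), FTop)
| nn_le_skip : forall r x S' c wm, nn O r ->
    occurs (QLe (Finite x) (S' ++ [(c, wm)])) r ->
    0 < x -> x <= sumw (S' ++ [(c, wm)]) ->
    nn O (qatom (QLe (Finite x) (S' ++ [(c, wm)])), qatom (QLe (Finite x) S'))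
| nn_le_take : forall r x S' c wm, nn O r ->
    occurs (QLe (Finite x) (S' ++ [(c, wm)])) r ->
    0 < x -> x <= sumw (S' ++ [(c, wm)]) ->
    nn O (qatom (QLe (Finite x) (S' ++ [(c, wm)])),
          conj [lift_elem c; qatom (QLe (Finite (x - wm)) S')])
| nn_lt_fact : forall r w S, nn O r -> occurs (QLt w S) r ->
    Rbar_lt w (Finite 0) ->
    nn O (qatom (QLt w S), FTop)
| nn_lt_skip : forall r x S' c wm, nn O r ->
    occurs (QLt (Finite x) (S' ++ [(c, wm)])) r ->
    0 <= x -> x < sumw (S' ++ [(c, wm)]) ->
    nn O (qatom (QLt (Finite x) (S' ++ [(c, wm)])), qatom (QLt (Finite x) S'))
| nn_lt_take : forall r x S' c wm, nn O r ->
    occurs (QLt (Finite x) (S' ++ [(c, wm)])) r ->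
    0 <= x -> x < sumw (S' ++ [(c, wm)]) ->
    nn O (qatom (QLt (Finite x) (S' ++ [(c, wm)])),
          conj [lift_elem c; qatom (QLt (Finite (x - wm)) S')]).

Definition Qset {A} (O : wprogram A) (q : xatom A) : Prop :=
  (forall a, q <> Orig a) /\ exists r, nn O r /\ occurs q r.

Definition strip {A} (O : wprogram A) (Z : litset (xatom A)) : litset (xatom A) :=
  fun x => Z x /\ ~ (exists q, Qset O q /\ x = Pos q).

Definition embed {A} (X : litset A) : litset (xatom A) :=
  fun x => exists l, X l /\ x = liftl l.

(* Main.v *)
Require Import Defs.
From Stdlib Require Import Reals List Lra ClassicalEpsilon Classical.
From Coquelicot Require Import Rbar.
Import ListNotations.
Open Scope R_scope.

Definition NN {A} (S : list (relem A * R)) := Forall (fun p : relem A * R => 0 <= snd p) S.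

Ltac emi := match goal with |- context [excluded_middle_informative ?P] =>
  destruct (excluded_middle_informative P) end.

Lemma wsum_app {A} (Z : litset A) S1 S2 : wsum Z (S1 ++ S2) = wsum Z S1 + wsum Z S2.
Proof. induction S1; simpl; [lra|]. rewrite IHS1; lra. Qed.
Lemma sumw_app {A} (S1 S2 : list (relem A * R)) : sumw (S1 ++ S2) = sumw S1 + sumw S2.
Proof. induction S1; simpl; [lra|]. rewrite IHS1; lra. Qed.
Lemma neg_app {A} (Z : litset A) S1 S2 : neg_sat_sum Z (S1 ++ S2) = neg_sat_sum Z S1 + neg_sat_sum Z S2.
Proof. induction S1; simpl; [lra|]. rewrite IHS1; lra. Qed.
Lemma psum_app {A} (Z : litset A) S1 S2 : psum Z (S1 ++ S2) = psum Z S1 + psum Z S2.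
Proof. induction S1; simpl; [lra|]. rewrite IHS1; lra. Qed.
Lemma pos_app {A} (S1 S2 : list (relem A * R)) : pos_part (S1 ++ S2) = pos_part S1 ++ pos_part S2.
Proof. unfold pos_part. apply flat_map_app. Qed.

Lemma wsum_decomp {A} (X : litset A) S : wsum X S = neg_sat_sum X S + psum X (pos_part S).
Proof.
  induction S as [|[[b l] w] S IH]; simpl; [lra|].
  destruct b; simpl; unfold esat; simpl; repeat emi; simpl; try tauto; rewrite IH; lra.
Qed.

Lemma nn_bounds {A} (X Y : litset A) S : NN S ->
  0 <= neg_sat_sum X S /\ 0 <= psum Y (pos_part S) /\
  neg_sat_sum X S + psum Y (pos_part S) <= sumw S /\
  0 <= wsum X S /\ wsum X S <= sumw S.
Proof.
  induction 1 as [|[[b l] w] S Hp HS IH]; simpl in *; [lra|].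
  destruct b; simpl; unfold esat; simpl; repeat emi; simpl; lra.
Qed.

Lemma psum_mono {A} (X Y : litset A) S : NN S -> (forall l, X l -> Y l) ->
  psum X (pos_part S) <= psum Y (pos_part S).
Proof.
  intros HN HXY; induction HN as [|[[b l] w] S Hp HS IH]; simpl in *; [lra|].
  destruct b; simpl; repeat emi; simpl; try lra. exfalso; auto.
Qed.

Lemma wsum_snoc {A} (X : litset A) S c w :
  wsum X (S ++ [(c, w)]) = wsum X S + (if excluded_middle_informative (esat X c) then w else 0).
Proof. rewrite wsum_app; simpl; lra. Qed.
Lemma neg_snoc {A} (X : litset A) S c w :
  neg_sat_sum X (S ++ [(c, w)]) = neg_sat_sum X S +
   (if fst c then 0 else if excluded_middle_informative (esat X c) then w else 0).
Proof. rewrite neg_app; simpl; lra. Qed.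
Lemma psum_snoc {A} (X : litset A) S c w :
  psum X (pos_part (S ++ [(c, w)])) = psum X (pos_part S) +
   (if fst c then (if excluded_middle_informative (X (snd c)) then w else 0) else 0).
Proof. rewrite pos_app, psum_app; destruct c as [[|] l]; simpl; lra. Qed.

Fixpoint nonot {X} (F : formula X) : Prop :=
  match F with
  | FNot _ => False
  | FAnd G H | FOr G H => nonot G /\ nonot H
  | _ => True end.

Lemma freduct_nonot {X} (Z : litset X) F : nonot (freduct Z F).
Proof. induction F; simpl; auto. destruct excluded_middle_informative; simpl; auto. Qed.

Lemma fsat_mono {X} (Y Y' : litset X) F : nonot F -> (forall x, Y x -> Y' x) ->
  fsat Y F -> fsat Y' F.
Proof. induction F; simpl; intuition. Qed.

Lemma fsat_red_self {X} (Z : litset X) F : fsat Z (freduct Z F) <-> fsat Z F.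
Proof. induction F; simpl; try tauto. destruct excluded_middle_informative; simpl; tauto. Qed.

Lemma fsat_red_not {X} (Y Z : litset X) G : fsat Y (freduct Z (FNot G)) <-> ~ fsat Z G.
Proof. simpl. destruct excluded_middle_informative; simpl; tauto. Qed.

Lemma freduct_conj {X} (Z : litset X) l : freduct Z (conj l) = conj (map (freduct Z) l).
Proof.
  induction l as [|F l IH]; simpl; auto.
  destruct l; simpl in *; auto. rewrite IH; reflexivity.
Qed.

Lemma fsat_conj {X} (Y : litset X) l : fsat Y (conj l) <-> (forall F, In F l -> fsat Y F).
Proof.
  induction l as [|F l IH]; simpl. { split; auto; tauto. }
  destruct l as [|G l].
  - simpl. split; [intros H F' [<-|[]]; auto | intros H; apply H; auto].
  - change (fsat Y (FAnd F (conj (G :: l))) <-> (forall F0, F = F0 \/ In F0 (G :: l) -> fsat Y F0)).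
    simpl fsat at 1. rewrite IH. split.
    + intros [H1 H2] F0 [<-|H]; auto.
    + intros H; split; auto.
Qed.

Lemma fsat_red_conj {X} (Y Z : litset X) l :
  fsat Y (freduct Z (conj l)) <-> (forall F, In F l -> fsat Y (freduct Z F)).
Proof.
  rewrite freduct_conj, fsat_conj. split.
  - intros H F HF; apply H, in_map; auto.
  - intros H F HF; apply in_map_iff in HF as [G [<- HG]]; auto.
Qed.

Lemma fsat_red_cons {X} (Y Z : litset X) F l :
  fsat Y (freduct Z (conj (F :: l))) <-> fsat Y (freduct Z F) /\ fsat Y (freduct Z (conj l)).
Proof.
  rewrite !fsat_red_conj. simpl. split.
  - intros H; split; auto.
  - intros [H1 H2] G [<-|HG]; auto.
Qed.

Lemma fsat_red_body {A} (Y Z : litset (xatom A)) Cs :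
  fsat Y (freduct Z (conj (body_nn Cs))) <->
  (forall C, In C Cs -> Y (Pos (QLe (wlo C) (welems C))) /\ ~ Z (Pos (QLt (whi C) (welems C)))).
Proof.
  rewrite fsat_red_conj. unfold body_nn. split.
  - intros H C HC. split.
    + apply (H (qatom (QLe (wlo C) (welems C)))). apply in_flat_map. exists C; simpl; auto.
    + apply (fsat_red_not Y Z (qatom (QLt (whi C) (welems C)))).
      apply H. apply in_flat_map. exists C; simpl; auto.
  - intros H F HF. apply in_flat_map in HF as [C [HC HF]]. simpl in HF.
    destruct (H C HC) as [H1 H2].
    destruct HF as [<-|[<-|[]]]; simpl; auto.
    destruct excluded_middle_informative; simpl; tauto.
Qed.

Lemma fsat_red_lift_elem {A} (Y Z : litset (xatom A)) c :
  fsat Y (freduct Z (lift_elem c)) <->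
  (if fst c then Y (liftl (snd c)) else ~ Z (liftl (snd c))).
Proof.
  destruct c as [[|] l]; unfold lift_elem; simpl.
  - destruct l; simpl; tauto.
  - destruct excluded_middle_informative; simpl; destruct l; simpl in *; tauto.
Qed.

Lemma ans_psat {X} (P : nprogram X) Z : answer_set P Z ->
  forall r, P r -> fsat Z (snd r) -> fsat Z (fst r).
Proof.
  intros [_ [HS _]] r Hr H.
  apply fsat_red_self. apply (HS (freduct Z (fst r), freduct Z (snd r))).
  - exists r; auto.
  - simpl; apply fsat_red_self; auto.
Qed.

Lemma ans_min {X} (P : nprogram X) Z : answer_set P Z ->
  forall Y : litset X, (forall x, Y x -> Z x) ->
  (forall r, P r -> fsat Y (freduct Z (snd r)) -> fsat Y (freduct Z (fst r))) ->
  forall x, Z x -> Y x.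
Proof.
  intros [HC [_ HM]] Y HYZ HY. apply HM; auto.
  - intros a [H1 H2]; apply (HC a); auto.
  - intros r [r0 [Hr0 ->]]; simpl; apply HY; auto.
Qed.

Definition qNN {A} (q : xatom A) : Prop :=
  match q with QLe _ S0 | QLt _ S0 => NN S0 | _ => True end.

Lemma fatom_liftl {A} (q : xatom A) l : fatom q (FLit (liftl l)) -> qNN q.
Proof. destruct l; simpl; intros <-; exact I. Qed.

Lemma fatom_conj {X} (q : X) l : fatom q (conj l) -> exists F, In F l /\ fatom q F.
Proof.
  induction l as [|F l IH]; simpl; [tauto|].
  destruct l as [|G l].
  - intros H; exists F; auto.
  - intros [H|H]; [exists F; auto|]. destruct (IH H) as [F' [? ?]]; exists F'; simpl in *; auto.
Qed.

Lemma fatom_body {A} O (Hw : nonneg_weights O) r (q : xatom A) :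
  O r -> fatom q (conj (body_nn (wbody r))) -> qNN q.
Proof.
  intros Hr H. apply fatom_conj in H as [F [HF Hq]].
  unfold body_nn in HF. apply in_flat_map in HF as [C [HC HF]].
  simpl in HF. destruct HF as [<-|[<-|[]]]; simpl in Hq; subst q; simpl;
  apply Forall_forall; intros p Hp; eapply Hw; eauto.
Qed.

Lemma NN_head {A} O (Hw : nonneg_weights O) (r : wrule A) : O r -> NN (welems (whead r)).
Proof. intros Hr; apply Forall_forall; intros p Hp; eapply Hw; eauto. Qed.

Lemma fatom_cbody {A} O (Hw : nonneg_weights O) r (q : xatom A) F :
  O r -> fatom q (conj (F :: body_nn (wbody r))) -> fatom q F \/ qNN q.
Proof.
  intros Hr H. apply fatom_conj in H as [G [[<-|HG] Hq]]; auto.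
  right. unfold body_nn in HG. apply in_flat_map in HG as [C [HC HF]].
  simpl in HF. destruct HF as [<-|[<-|[]]]; simpl in Hq; subst q; simpl;
  apply Forall_forall; intros p Hp; eapply Hw; eauto.
Qed.

Lemma nn_qNN {A} O (Hw : nonneg_weights O) (r : nrule (xatom A)) :
  nn O r -> forall q, occurs q r -> qNN q.
Proof.
  induction 1; intros q Hq; unfold occurs in Hq; simpl in Hq.
  - destruct Hq as [<-|Hq]; [exact I|]. eapply fatom_liftl; eauto.
  - destruct Hq as [Hq|Hq]; [eapply fatom_liftl; eauto|].
    destruct (fatom_cbody O Hw _ _ _ H Hq) as [Hq'|]; auto. simpl in Hq'; subst; exact I.
  - destruct Hq as [[]|Hq].
    destruct (fatom_cbody O Hw _ _ _ H Hq) as [Hq'|]; auto. simpl in Hq'; subst; simpl; eapply NN_head; eauto.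
  - destruct Hq as [[]|Hq].
    destruct (fatom_cbody O Hw _ _ _ H Hq) as [Hq'|]; auto. simpl in Hq'; subst; simpl; eapply NN_head; eauto.
  - destruct Hq as [<-|[]]. apply IHnn; auto.
  - assert (NN (S' ++ [(c, wm)])) by (apply (IHnn _ H0)).
    destruct Hq as [<-|<-]; simpl; auto. apply Forall_app in H3; tauto.
  - assert (NN (S' ++ [(c, wm)])) by (apply (IHnn _ H0)).
    destruct Hq as [<-|[Hq|<-]]; simpl; auto.
    + destruct c as [[|] l]; unfold lift_elem in Hq; simpl in Hq; eapply fatom_liftl; eauto.
    + apply Forall_app in H3; tauto.
  - destruct Hq as [<-|[]]. apply IHnn; auto.
  - assert (NN (S' ++ [(c, wm)])) by (apply (IHnn _ H0)).
    destruct Hq as [<-|<-]; simpl; auto. apply Forall_app in H3; tauto.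
  - assert (NN (S' ++ [(c, wm)])) by (apply (IHnn _ H0)).
    destruct Hq as [<-|[Hq|<-]]; simpl; auto.
    + destruct c as [[|] l]; unfold lift_elem in Hq; simpl in Hq; eapply fatom_liftl; eauto.
    + apply Forall_app in H3; tauto.
Qed.

Lemma Qset_NN {A} O (Hw : nonneg_weights O) (q : xatom A) : Qset O q -> qNN q.
Proof. intros [_ [r [Hr Ho]]]; eapply nn_qNN; eauto. Qed.

Definition XZ {A} (Z : litset (xatom A)) : litset A := fun l => Z (liftl l).

Definition E {A} (O : wprogram A) (X : litset A) : litset (xatom A) := fun x =>
  match x with
  | Pos (Orig a) => X (Pos a)
  | Neg (Orig a) => X (Neg a)
  | Pos (QNot l) => Qset O (QNot l) /\ ~ X l
  | Pos (QLe w S0) => Qset O (QLe w S0) /\ Rbar_le w (Finite (wsum X S0))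
  | Pos (QLt w S0) => Qset O (QLt w S0) /\ Rbar_lt w (Finite (wsum X S0))
  | Neg _ => False
  end.

Lemma E_lift {A} O (X : litset A) l : E O X (liftl l) <-> X l.
Proof. destruct l; simpl; tauto. Qed.

Lemma occ_head {A} (q : xatom A) F : occurs q (qatom q, F).
Proof. left; reflexivity. Qed.

Lemma Qset_of {A} O (r : nrule (xatom A)) q : nn O r -> occurs q r -> (forall a, q <> Orig a) -> Qset O q.
Proof. intros; split; eauto. Qed.

Lemma wsum_ext {A} (X Y : litset A) S : (forall l, X l <-> Y l) -> wsum X S = wsum Y S.
Proof.
  intros H; induction S as [|[[b l] w] S IH]; simpl; auto.
  rewrite IH; unfold esat; simpl; destruct b; repeat emi; try reflexivity;
  exfalso; firstorder.
Qed.
Lemma neg_ext {A} (X Y : litset A) S : (forall l, X l <-> Y l) -> neg_sat_sum X S = neg_sat_sum Y S.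
Proof.
  intros H; induction S as [|[[b l] w] S IH]; simpl; auto.
  rewrite IH; unfold esat; simpl; destruct b; repeat emi; try reflexivity;
  exfalso; firstorder.
Qed.
Lemma psum_ext {A} (X Y : litset A) S : (forall l, X l <-> Y l) -> psum X S = psum Y S.
Proof.
  intros H; induction S as [|[l w] S IH]; simpl; auto.
  rewrite IH; repeat emi; try reflexivity; exfalso; firstorder.
Qed.

Definition redmodel {A} (O : wprogram A) (Y Z : litset (xatom A)) :=
  forall r, nn O r -> fsat Y (freduct Z (snd r)) -> fsat Y (freduct Z (fst r)).

Lemma le_complete {A} O (Hw : nonneg_weights O) (Y Z : litset (xatom A)) :
  redmodel O Y Z ->
  forall S w, Qset O (QLe w S) ->
  Rbar_le (Rbar_minus w (Finite (neg_sat_sum (XZ Z) S))) (Finite (psum (XZ Y) (pos_part S))) ->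
  Y (Pos (QLe w S)).
Proof.
  intros HY S. induction S as [|[c wm] S' IH] using rev_ind; intros w HQ Hle;
  pose proof (Qset_NN O Hw _ HQ) as HN; simpl in HN;
  destruct HQ as [_ [r [Hr Ho]]].
  - destruct w as [x| |]; simpl in Hle; try contradiction.
    + apply (HY _ (nn_le_fact Hr Ho ltac:(simpl; lra))); simpl; auto.
    + apply (HY _ (nn_le_fact Hr Ho ltac:(simpl; auto))); simpl; auto.
  - destruct w as [x| |]; simpl in Hle; try contradiction.
    2: apply (HY _ (nn_le_fact Hr Ho ltac:(simpl; auto))); simpl; auto.
    destruct (Rle_dec x 0) as [Hx|Hx].
    { apply (HY _ (nn_le_fact Hr Ho ltac:(simpl; lra))); simpl; auto. }
    assert (Hx' : 0 < x) by lra.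
    destruct (nn_bounds (XZ Z) (XZ Y) _ HN) as (B1 & B2 & B3 & _).
    assert (Hs : x <= sumw (S' ++ [(c, wm)])) by lra.
    assert (HN' : NN S') by (apply Forall_app in HN; tauto).
    assert (Hwm : 0 <= wm) by (apply Forall_app in HN as [_ HN2]; inversion HN2; auto).
    pose proof (nn_le_skip S' c wm Hr Ho Hx' Hs) as Hskip.
    pose proof (nn_le_take S' c wm Hr Ho Hx' Hs) as Htake.
    rewrite neg_snoc, psum_snoc in Hle.
    destruct c as [[|] l]; simpl in Hle.
    + destruct (excluded_middle_informative (XZ Y l)) as [Hl|Hl].
      * apply (HY _ Htake). cbn [snd]. apply fsat_red_cons. split.
        -- apply fsat_red_lift_elem; simpl; exact Hl.
        -- simpl. apply IH.
           ++ eapply Qset_of; [exact Htake| |discriminate]. right; simpl; right; reflexivity.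
           ++ simpl. lra.
      * apply (HY _ Hskip). simpl. apply IH.
        -- eapply Qset_of; [exact Hskip| |discriminate]. right; simpl; reflexivity.
        -- simpl. lra.
    + unfold esat in Hle; simpl in Hle.
      destruct (excluded_middle_informative (~ XZ Z l)) as [Hl|Hl].
      * apply (HY _ Htake). cbn [snd]. apply fsat_red_cons. split.
        -- apply fsat_red_lift_elem; simpl; exact Hl.
        -- simpl. apply IH.
           ++ eapply Qset_of; [exact Htake| |discriminate]. right; simpl; right; reflexivity.
           ++ simpl. lra.
      * apply (HY _ Hskip). simpl. apply IH.
        -- eapply Qset_of; [exact Hskip| |discriminate]. right; simpl; reflexivity.
        -- simpl. lra.
Qed.

Lemma lt_complete {A} O (Hw : nonneg_weights O) (Y Z : litset (xatom A)) :
  redmodel O Y Z ->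
  forall S w, Qset O (QLt w S) ->
  Rbar_lt (Rbar_minus w (Finite (neg_sat_sum (XZ Z) S))) (Finite (psum (XZ Y) (pos_part S))) ->
  Y (Pos (QLt w S)).
Proof.
  intros HY S. induction S as [|[c wm] S' IH] using rev_ind; intros w HQ Hle;
  pose proof (Qset_NN O Hw _ HQ) as HN; simpl in HN;
  destruct HQ as [_ [r [Hr Ho]]].
  - destruct w as [x| |]; simpl in Hle; try contradiction.
    + apply (HY _ (nn_lt_fact Hr Ho ltac:(simpl; lra))); simpl; auto.
    + apply (HY _ (nn_lt_fact Hr Ho ltac:(simpl; auto))); simpl; auto.
  - destruct w as [x| |]; simpl in Hle; try contradiction.
    2: apply (HY _ (nn_lt_fact Hr Ho ltac:(simpl; auto))); simpl; auto.
    destruct (Rlt_dec x 0) as [Hx|Hx].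
    { apply (HY _ (nn_lt_fact Hr Ho ltac:(simpl; lra))); simpl; auto. }
    assert (Hx' : 0 <= x) by lra.
    destruct (nn_bounds (XZ Z) (XZ Y) _ HN) as (B1 & B2 & B3 & _).
    assert (Hs : x < sumw (S' ++ [(c, wm)])) by lra.
    assert (HN' : NN S') by (apply Forall_app in HN; tauto).
    assert (Hwm : 0 <= wm) by (apply Forall_app in HN as [_ HN2]; inversion HN2; auto).
    pose proof (nn_lt_skip S' c wm Hr Ho Hx' Hs) as Hskip.
    pose proof (nn_lt_take S' c wm Hr Ho Hx' Hs) as Htake.
    rewrite neg_snoc, psum_snoc in Hle.
    destruct c as [[|] l]; simpl in Hle.
    + destruct (excluded_middle_informative (XZ Y l)) as [Hl|Hl].
      * apply (HY _ Htake). cbn [snd]. apply fsat_red_cons. split.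
        -- apply fsat_red_lift_elem; simpl; exact Hl.
        -- simpl. apply IH.
           ++ eapply Qset_of; [exact Htake| |discriminate]. right; simpl; right; reflexivity.
           ++ simpl. lra.
      * apply (HY _ Hskip). simpl. apply IH.
        -- eapply Qset_of; [exact Hskip| |discriminate]. right; simpl; reflexivity.
        -- simpl. lra.
    + unfold esat in Hle; simpl in Hle.
      destruct (excluded_middle_informative (~ XZ Z l)) as [Hl|Hl].
      * apply (HY _ Htake). cbn [snd]. apply fsat_red_cons. split.
        -- apply fsat_red_lift_elem; simpl; exact Hl.
        -- simpl. apply IH.
           ++ eapply Qset_of; [exact Htake| |discriminate]. right; simpl; right; reflexivity.
           ++ simpl. lra.
      * apply (HY _ Hskip). simpl. apply IH.
        -- eapply Qset_of; [exact Hskip| |discriminate]. right; simpl; reflexivity.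
        -- simpl. lra.
Qed.

Lemma qnot_rule {A} (O : wprogram A) r l : nn O r -> occurs (QNot l) r ->
  nn O (qatom (QNot l), FNot (FLit (liftl l))).
Proof.
  intros Hr. pose proof Hr as Hr0. revert Hr0. induction Hr; intros Hr0 Ho; unfold occurs in Ho; cbn [fst snd] in Ho.
  - destruct Ho as [Ho|Ho]; simpl in Ho.
    + injection Ho as ->; exact Hr0.
    + destruct l0; simpl in Ho; discriminate.
  - destruct Ho as [Ho|Ho]; [destruct l0; simpl in Ho; discriminate|].
    apply fatom_conj in Ho as [F [[<-|HF] Hq]].
    + simpl in Hq. injection Hq as ->. eapply nn_qnot; eauto.
    + unfold body_nn in HF; apply in_flat_map in HF as [C [_ HF]]; simpl in HF.
      destruct HF as [<-|[<-|[]]]; simpl in Hq; discriminate.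
  - destruct Ho as [[]|Ho].
    apply fatom_conj in Ho as [F [[<-|HF] Hq]].
    + simpl in Hq; discriminate.
    + unfold body_nn in HF; apply in_flat_map in HF as [C [_ HF]]; simpl in HF.
      destruct HF as [<-|[<-|[]]]; simpl in Hq; discriminate.
  - destruct Ho as [[]|Ho].
    apply fatom_conj in Ho as [F [[<-|HF] Hq]].
    + simpl in Hq; discriminate.
    + unfold body_nn in HF; apply in_flat_map in HF as [C [_ HF]]; simpl in HF.
      destruct HF as [<-|[<-|[]]]; simpl in Hq; discriminate.
  - destruct Ho as [Ho|[]]; simpl in Ho; discriminate.
  - destruct Ho as [Ho|Ho]; simpl in Ho; discriminate.
  - destruct Ho as [Ho|[Ho|Ho]]; simpl in Ho; try discriminate.
    destruct c as [[|] l1]; unfold lift_elem in Ho; simpl in Ho; destruct l1; simpl in Ho; discriminate.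
  - destruct Ho as [Ho|[]]; simpl in Ho; discriminate.
  - destruct Ho as [Ho|Ho]; simpl in Ho; discriminate.
  - destruct Ho as [Ho|[Ho|Ho]]; simpl in Ho; try discriminate.
    destruct c as [[|] l1]; unfold lift_elem in Ho; simpl in Ho; destruct l1; simpl in Ho; discriminate.
Qed.

Lemma esat_from_red {A} (Y Z : litset (xatom A)) c :
  (forall x, Y x -> Z x) -> fsat Y (freduct Z (lift_elem c)) -> esat (XZ Z) c.
Proof.
  intros HYZ H. apply fsat_red_lift_elem in H. unfold esat, XZ.
  destruct c as [[|] l]; simpl in *; auto.
Qed.

Lemma E_sub_Z {A} O (Hw : nonneg_weights O) (Z : litset (xatom A)) :
  answer_set (nn O) Z -> forall x, E O (XZ Z) x -> Z x.
Proof.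
  intros HA.
  assert (HM : redmodel O Z Z).
  { intros r Hr H. apply fsat_red_self. apply (ans_psat _ _ HA _ Hr). apply fsat_red_self; auto. }
  intros [[a|l|w S|w S]|q]; simpl; try tauto.
  - intros [[_ [r [Hr Ho]]] Hl].
    apply (ans_psat _ _ HA _ (qnot_rule O r l Hr Ho)). simpl. exact Hl.
  - intros [HQ Hle]. apply (le_complete O Hw Z Z HM S w HQ).
    rewrite wsum_decomp in Hle. destruct w; simpl in *; auto; lra.
  - intros [HQ Hle]. apply (lt_complete O Hw Z Z HM S w HQ).
    rewrite wsum_decomp in Hle. destruct w; simpl in *; auto; lra.
  - destruct q; simpl; tauto.
Qed.

Lemma snoc_nn {A} (S' : list (relem A * R)) c wm : NN (S' ++ [(c, wm)]) -> NN S' /\ 0 <= wm.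
Proof. intros H; apply Forall_app in H as [H1 H2]; inversion H2; auto. Qed.

Lemma Z_sub_E {A} O (Hw : nonneg_weights O) (Z : litset (xatom A)) :
  answer_set (nn O) Z -> forall x, Z x -> E O (XZ Z) x.
Proof.
  intros HA.
  set (Y := fun x => Z x /\ E O (XZ Z) x).
  assert (HYZ : forall x, Y x -> Z x) by (intros x [? ?]; auto).
  assert (H : forall x, Z x -> Y x); [|intros x Hx; apply H; auto].
  apply (ans_min _ _ HA Y HYZ).
  intros r Hr HYb.
  assert (HZh : fsat Z (fst r)).
  { apply (ans_psat _ _ HA _ Hr). apply fsat_red_self.
    eapply fsat_mono; [apply freduct_nonot| exact HYZ | exact HYb]. }
  pose proof Hr as Hr'. revert Hr' HYb HZh.
  induction Hr; intros Hr' HYb HZh; cbn [fst snd] in *.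
  - apply fsat_red_not in HYb. simpl in *. split; auto. split.
    + eapply Qset_of; [exact Hr'| apply occ_head| discriminate].
    + unfold XZ. destruct l; simpl in *; auto.
  - destruct l; simpl in *; split; auto.
  - contradiction.
  - contradiction.
  - simpl in *. split; auto. split.
    + eapply Qset_of; [exact Hr'| apply occ_head| discriminate].
    + pose proof (nn_qNN O Hw _ Hr _ H) as HN; simpl in HN.
      destruct (nn_bounds (XZ Z) (XZ Z) _ HN) as (_&_&_&B&_).
      destruct w; simpl in *; auto; lra.
  - simpl in *. split; auto. split.
    + eapply Qset_of; [exact Hr'| apply occ_head| discriminate].
    + destruct HYb as [_ [_ Hle]]. simpl in Hle.
      destruct (snoc_nn _ _ _ (nn_qNN O Hw _ Hr _ H)) as [_ Hwm].
      simpl. rewrite wsum_snoc. destruct excluded_middle_informative; lra.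
  - apply fsat_red_cons in HYb as [Hc Hq].
    apply esat_from_red in Hc; auto. simpl in Hq.
    simpl in *. split; auto. split.
    + eapply Qset_of; [exact Hr'| apply occ_head| discriminate].
    + destruct Hq as [_ [_ Hle]]. simpl in Hle.
      simpl. rewrite wsum_snoc. destruct excluded_middle_informative; [lra|contradiction].
  - simpl in *. split; auto. split.
    + eapply Qset_of; [exact Hr'| apply occ_head| discriminate].
    + pose proof (nn_qNN O Hw _ Hr _ H) as HN; simpl in HN.
      destruct (nn_bounds (XZ Z) (XZ Z) _ HN) as (_&_&_&B&_).
      destruct w; simpl in *; auto; lra.
  - simpl in *. split; auto. split.
    + eapply Qset_of; [exact Hr'| apply occ_head| discriminate].
    + destruct HYb as [_ [_ Hle]]. simpl in Hle.
      destruct (snoc_nn _ _ _ (nn_qNN O Hw _ Hr _ H)) as [_ Hwm].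
      simpl. rewrite wsum_snoc. destruct excluded_middle_informative; lra.
  - apply fsat_red_cons in HYb as [Hc Hq].
    apply esat_from_red in Hc; auto. simpl in Hq.
    simpl in *. split; auto. split.
    + eapply Qset_of; [exact Hr'| apply occ_head| discriminate].
    + destruct Hq as [_ [_ Hle]]. simpl in Hle.
      simpl. rewrite wsum_snoc. destruct excluded_middle_informative; [lra|contradiction].
Qed.

Lemma ans_char {A} O (Hw : nonneg_weights O) (Z : litset (xatom A)) :
  answer_set (nn O) Z -> forall x, Z x <-> E O (XZ Z) x.
Proof. intros HA x; split; [apply Z_sub_E | apply E_sub_Z]; auto. Qed.

Lemma fatom_conj_in {X} (q : X) l F : In F l -> fatom q F -> fatom q (conj l).
Proof.
  induction l as [|G l IH]; simpl; [tauto|].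
  destruct l as [|H l].
  - intros [<-|[]]; auto.
  - intros [<-|HF] Hq; [left; auto| right; apply IH; auto].
Qed.

Lemma Qset_body_le {A} O (r : nrule (xatom A)) F Cs C : nn O r -> snd r = conj (F :: body_nn Cs) ->
  In C Cs -> Qset O (QLe (wlo C) (welems C)).
Proof.
  intros Hr Hs HC. eapply Qset_of; [exact Hr| |discriminate]. right. rewrite Hs.
  apply (fatom_conj_in _ _ (qatom (QLe (wlo C) (welems C)))); [|reflexivity].
  right. apply in_flat_map. exists C; simpl; auto.
Qed.

Lemma Qset_body_lt {A} O (r : nrule (xatom A)) F Cs C : nn O r -> snd r = conj (F :: body_nn Cs) ->
  In C Cs -> Qset O (QLt (whi C) (welems C)).
Proof.
  intros Hr Hs HC. eapply Qset_of; [exact Hr| |discriminate]. right. rewrite Hs.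
  apply (fatom_conj_in _ _ (FNot (qatom (QLt (whi C) (welems C))))); [|reflexivity].
  right. apply in_flat_map. exists C; simpl; auto.
Qed.

Lemma Rbar_notlt_le x y : ~ Rbar_lt x y -> Rbar_le y x.
Proof. destruct x, y; simpl; auto; lra. Qed.
Lemma Rbar_notle_lt x y : ~ Rbar_le x y -> Rbar_lt y x.
Proof. destruct x, y; simpl; auto; lra. Qed.
Lemma Rbar_lt_notle x y : Rbar_lt x y -> ~ Rbar_le y x.
Proof. destruct x, y; simpl; auto; lra. Qed.



Lemma body_sat {A} O (Hw : nonneg_weights O) (Z : litset (xatom A)) rr F (r : wrule A) :
  answer_set (nn O) Z -> nn O rr -> snd rr = conj (F :: body_nn (wbody r)) ->
  (forall C, In C (wbody r) -> wcsat (XZ Z) C) ->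
  fsat Z (freduct Z (conj (body_nn (wbody r)))).
Proof.
  intros HA Hrr Hs HB. apply fsat_red_body. intros C HC. destruct (HB C HC) as [H1 H2]. split.
  - apply (E_sub_Z O Hw); auto. simpl. split; auto. eapply Qset_body_le; eauto.
  - intros HZ. apply (Z_sub_E O Hw _ HA) in HZ. simpl in HZ. destruct HZ as [_ HZ].
    apply Rbar_lt_notle in HZ; auto.
Qed.

Definition Zp {A} (Z : litset (xatom A)) (Y : litset A) : litset (xatom A) := fun x =>
  Z x /\ match x with
  | Pos (Orig a) => Y (Pos a)
  | Neg (Orig a) => Y (Neg a)
  | Pos (QLe w S0) => Rbar_le (Rbar_minus w (Finite (neg_sat_sum (XZ Z) S0))) (Finite (psum Y (pos_part S0)))
  | _ => True end.

Lemma ans_to_w {A} O (Hw : nonneg_weights O) (Z : litset (xatom A)) :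
  answer_set (nn O) Z -> w_answer_set O (XZ Z).
Proof.
  intros HA. pose proof HA as [HCons _]. split; [|split].
  - intros a Ha; apply (HCons (Orig a)); exact Ha.
  - intros r Hr HB. split.
    + apply NNPP; intros Hn.
      apply (ans_psat _ _ HA _ (nn_lo O r Hr)). cbn [snd]. apply fsat_red_self.
      apply fsat_red_cons; split.
      * apply fsat_red_not. intros HZ. apply (Z_sub_E O Hw _ HA) in HZ. simpl in HZ. tauto.
      * exact (body_sat O Hw Z _ _ r HA (nn_lo O r Hr) eq_refl HB).
    + apply NNPP; intros Hn.
      apply (ans_psat _ _ HA _ (nn_hi O r Hr)). cbn [snd]. apply fsat_red_self.
      apply fsat_red_cons; split.
      * cbn. apply (E_sub_Z O Hw); auto. simpl. split; [|apply Rbar_notle_lt; auto].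
        eapply Qset_of; [exact (nn_hi O r Hr)| |discriminate]. right; cbn [snd].
        apply (fatom_conj_in _ _ (qatom (QLt (whi (whead r)) (welems (whead r))))); [left; auto|reflexivity].
      * exact (body_sat O Hw Z _ _ r HA (nn_hi O r Hr) eq_refl HB).
  - intros lo; split.
    + intros Hcl. apply Hcl. intros dr [r [_ [_ [_ [H _]]]]] _; exact H.
    + intros Hl Y HY.
      assert (HM : forall x, Z x -> Zp Z Y x).
      { apply (ans_min _ _ HA (Zp Z Y)); [intros x [? ?]; auto|].
        intros rr Hrr HYb.
        assert (HZh : fsat Z (fst rr)).
        { apply (ans_psat _ _ HA _ Hrr). apply fsat_red_self.
          eapply fsat_mono; [apply freduct_nonot| |exact HYb]. intros x [? ?]; auto. }
        pose proof Hrr as Hr'. revert Hr' HYb HZh.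
        induction Hrr; intros Hr' HYb HZh; cbn [fst snd] in *.
        - simpl in *. split; auto.
        - apply fsat_red_cons in HYb as [Hn Hb].
          assert (HYl : Y l).
          { apply (HY (l, map (lreduct (XZ Z)) (wbody r))).
            - exists r. refine (Logic.conj H (Logic.conj _ (Logic.conj (ex_intro _ w H0) (Logic.conj _ eq_refl)))).
              + intros C HC. destruct (proj1 (fsat_red_body (Zp Z Y) Z (wbody r)) Hb C HC) as [_ Hlt].
                apply Rbar_notlt_le. intros Hlt'. apply Hlt. apply (E_sub_Z O Hw); auto. simpl. split; auto.
                eapply Qset_body_lt; [exact Hr'|reflexivity|exact HC].
              + unfold XZ; simpl in HZh; destruct l; exact HZh.
            - intros LC HLC. cbn [snd] in HLC. apply in_map_iff in HLC as [C [<- HC]].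
              destruct (proj1 (fsat_red_body (Zp Z Y) Z (wbody r)) Hb C HC) as [[_ Hle] _]. exact Hle. }
          destruct l; simpl in *; split; auto.
        - contradiction.
        - contradiction.
        - simpl in *. split; auto.
          pose proof (nn_qNN O Hw _ Hrr _ H) as HN; simpl in HN.
          destruct (nn_bounds (XZ Z) Y _ HN) as (B1&B2&_).
          destruct w; simpl in *; auto; lra.
        - simpl in *. split; auto. destruct HYb as [_ Hle].
          destruct (snoc_nn _ _ _ (nn_qNN O Hw _ Hrr _ H)) as [_ Hwm].
          rewrite neg_snoc, psum_snoc. simpl in *.
          destruct c as [[|] l0]; simpl; repeat emi; lra.
        - apply fsat_red_cons in HYb as [Hc Hq].
          apply fsat_red_lift_elem in Hc. simpl in Hq.
          simpl in *. split; auto. destruct Hq as [_ Hle].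
          rewrite neg_snoc, psum_snoc. simpl in *.
          destruct c as [[|] l0]; simpl in *.
          + destruct excluded_middle_informative as [_|Hn]; [lra|].
            exfalso; apply Hn; destruct l0; apply Hc.
          + unfold esat; simpl. destruct excluded_middle_informative as [_|Hn]; [lra|].
            exfalso; apply Hn; unfold XZ; exact Hc.
        - simpl in *; split; auto.
        - simpl in *; split; auto.
        - simpl in *; split; auto. }
      destruct (HM (liftl lo) Hl) as [_ H]. destruct lo; exact H.
Qed.

Lemma fsat_cbody {X0} (M : litset (xatom X0)) F Cs :
  fsat M (conj (F :: body_nn Cs)) ->
  fsat M F /\ forall C, In C Cs -> M (Pos (QLe (wlo C) (welems C))) /\ ~ M (Pos (QLt (whi C) (welems C))).
Proof.
  intros H. apply fsat_red_self in H. apply fsat_red_cons in H as [H1 H2].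
  split; [apply fsat_red_self; auto|]. apply fsat_red_body; auto.
Qed.

Lemma XZE {A} O (X : litset A) : forall l, XZ (E O X) l <-> X l.
Proof. intros l; apply E_lift. Qed.

Lemma fsat_lift_elem {A} (M : litset (xatom A)) c : fsat M (lift_elem c) <-> esat (XZ M) c.
Proof. destruct c as [[|] l]; unfold lift_elem, esat, XZ; simpl; destruct l; simpl; tauto. Qed.

Lemma E_model {A} O (Hw : nonneg_weights O) (X : litset A) : w_answer_set O X ->
  forall r, nn O r -> fsat (E O X) (snd r) -> fsat (E O X) (fst r).
Proof.
  intros [HC [HS Hcl]] r Hr. pose proof Hr as Hr'. revert Hr'.
  induction Hr; intros Hr' Hb; cbn [fst snd] in *.
  - simpl in *. split.
    + eapply Qset_of; [exact Hr'| apply occ_head| discriminate].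
    + intros Hl; apply Hb; apply E_lift; auto.
  - apply fsat_cbody in Hb as [Hn _]. simpl in Hn.
    apply E_lift. apply NNPP; intros Hl; apply Hn; split; auto.
    eapply Qset_of; [exact Hr'| |discriminate]. right; cbn [snd].
    apply (fatom_conj_in _ _ (FNot (qatom (QNot l)))); [left; auto|reflexivity].
  - apply fsat_cbody in Hb as [Hn Hb]. simpl in Hn. apply Hn. split.
    + eapply Qset_of; [exact Hr'| |discriminate]. right; cbn [snd].
      apply (fatom_conj_in _ _ (FNot (qatom (QLe (wlo (whead r)) (welems (whead r)))))); [left; auto|reflexivity].
    + apply HS; auto. intros C HCin. destruct (Hb C HCin) as [[_ H1] H2]. split; auto.
      apply Rbar_notlt_le. intros H3. apply H2. split; auto.
      eapply Qset_body_lt; [exact Hr'|reflexivity|exact HCin].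
  - apply fsat_cbody in Hb as [Hn Hb]. simpl in Hn. destruct Hn as [_ Hn].
    destruct (HS r H) as [_ Hu].
    + intros C HCin. destruct (Hb C HCin) as [[_ H1] H2]. split; auto.
      apply Rbar_notlt_le. intros H3. apply H2. split; auto.
      eapply Qset_body_lt; [exact Hr'|reflexivity|exact HCin].
    + eapply Rbar_lt_notle; eauto.
  - simpl. split.
    + eapply Qset_of; [exact Hr'| apply occ_head| discriminate].
    + pose proof (nn_qNN O Hw _ Hr _ H) as HN; simpl in HN.
      destruct (nn_bounds X X _ HN) as (_&_&_&B&_).
      destruct w; simpl in *; auto; lra.
  - simpl in *. split.
    + eapply Qset_of; [exact Hr'| apply occ_head| discriminate].
    + destruct Hb as [_ Hle]. simpl in Hle.
      destruct (snoc_nn _ _ _ (nn_qNN O Hw _ Hr _ H)) as [_ Hwm].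
      simpl. rewrite wsum_snoc. destruct excluded_middle_informative; lra.
  - simpl in Hb. destruct Hb as [Hc Hq]. apply fsat_lift_elem in Hc.
    assert (Hc' : esat X c).
    { destruct c as [[|] l]; unfold esat, XZ in *; simpl in *; [apply (E_lift O); auto|rewrite (E_lift O) in Hc; auto]. }
    simpl in *. split.
    + eapply Qset_of; [exact Hr'| apply occ_head| discriminate].
    + destruct Hq as [_ Hle]. simpl in Hle.
      simpl. rewrite wsum_snoc. destruct excluded_middle_informative; [lra|contradiction].
  - simpl. split.
    + eapply Qset_of; [exact Hr'| apply occ_head| discriminate].
    + pose proof (nn_qNN O Hw _ Hr _ H) as HN; simpl in HN.
      destruct (nn_bounds X X _ HN) as (_&_&_&B&_).
      destruct w; simpl in *; auto; lra.
  - simpl in *. split.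
    + eapply Qset_of; [exact Hr'| apply occ_head| discriminate].
    + destruct Hb as [_ Hle]. simpl in Hle.
      destruct (snoc_nn _ _ _ (nn_qNN O Hw _ Hr _ H)) as [_ Hwm].
      simpl. rewrite wsum_snoc. destruct excluded_middle_informative; lra.
  - simpl in Hb. destruct Hb as [Hc Hq]. apply fsat_lift_elem in Hc.
    assert (Hc' : esat X c).
    { destruct c as [[|] l]; unfold esat, XZ in *; simpl in *; [apply (E_lift O); auto|rewrite (E_lift O) in Hc; auto]. }
    simpl in *. split.
    + eapply Qset_of; [exact Hr'| apply occ_head| discriminate].
    + destruct Hq as [_ Hle]. simpl in Hle.
      simpl. rewrite wsum_snoc. destruct excluded_middle_informative; [lra|contradiction].
Qed.

Lemma w_to_ans {A} O (Hw : nonneg_weights O) (X : litset A) :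
  w_answer_set O X -> answer_set (nn O) (E O X).
Proof.
  intros HW. pose proof HW as [HC [HS Hcl]].
  pose proof (E_model O Hw X HW) as HEm.
  split; [|split].
  - intros [a|l|w S|w S] [H1 H2]; simpl in *; try tauto. apply (HC a); auto.
  - intros r [r0 [Hr0 ->]]; cbn [fst snd]. intros H. apply fsat_red_self.
    apply HEm; auto. apply fsat_red_self; auto.
  - intros Y HYc HYs HYE.
    assert (HM : redmodel O Y (E O X)).
    { intros r Hr H. apply (HYs (freduct (E O X) (fst r), freduct (E O X) (snd r))); auto.
      exists r; auto. }
    assert (Hi : forall l, X l -> Y (liftl l)).
    { intros l Hl. apply Hcl in Hl. apply (Hl (XZ Y)).
      intros dr [r [Hr [Hup [[w Hin] [Hx Hsnd]]]]] Hlow.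
      destruct dr as [l0 LCs]; cbn [fst snd] in *; subst LCs.
      apply (HM _ (nn_head O r l0 w Hr Hin)). cbn [snd].
      apply fsat_red_cons; split.
      - apply fsat_red_not. simpl. tauto.
      - apply fsat_red_body. intros C HCin. split.
        + apply (le_complete O Hw Y (E O X) HM).
          * eapply Qset_body_le; [exact (nn_head O r l0 w Hr Hin)|reflexivity|exact HCin].
          * rewrite (neg_ext _ X _ (XZE O X)).
            apply (Hlow (lreduct X C)). apply in_map; auto.
        + simpl. intros [_ Hlt]. eapply Rbar_lt_notle; eauto. }
    intros [[a|l|w S|w S]|q] HE.
    + exact (Hi (Pos a) HE).
    + destruct HE as [[_ [r [Hr Ho]]] Hl].
      apply (HM _ (qnot_rule O r l Hr Ho)). cbn [snd]. apply fsat_red_not.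
      intros Hx; apply Hl; apply (E_lift O); exact Hx.
    + destruct HE as [HQ Hle]. apply (le_complete O Hw Y (E O X) HM S w HQ).
      pose proof (Qset_NN O Hw _ HQ) as HN. simpl in HN.
      rewrite (neg_ext _ X _ (XZE O X)).
      pose proof (psum_mono X (XZ Y) S HN Hi) as Hm.
      rewrite wsum_decomp in Hle. destruct w; simpl in *; auto; lra.
    + destruct HE as [HQ Hle]. apply (lt_complete O Hw Y (E O X) HM S w HQ).
      pose proof (Qset_NN O Hw _ HQ) as HN. simpl in HN.
      rewrite (neg_ext _ X _ (XZE O X)).
      pose proof (psum_mono X (XZ Y) S HN Hi) as Hm.
      rewrite wsum_decomp in Hle. destruct w; simpl in *; auto; lra.
    + destruct q; simpl in HE; [exact (Hi (Neg a) HE)|contradiction..].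
Qed.

Lemma strip_E {A} O (X : litset A) x : strip O (E O X) x <-> embed X x.
Proof.
  unfold strip, embed. split.
  - intros [H1 H2]. destruct x as [[a|l|w S|w S]|[a|l|w S|w S]]; simpl in H1.
    + exists (Pos a); auto.
    + exfalso; apply H2; exists (QNot l); split; [tauto|auto].
    + exfalso; apply H2; exists (QLe w S); split; [tauto|auto].
    + exfalso; apply H2; exists (QLt w S); split; [tauto|auto].
    + exists (Neg a); auto.
    + contradiction.
    + contradiction.
    + contradiction.
  - intros [l [Hl ->]]. split.
    + apply E_lift; auto.
    + intros [q [[Hq _] He]]. destruct l; simpl in He; [injection He as <-; eapply Hq; eauto|discriminate].
Qed.

Lemma strip_ext {A} O (Z1 Z2 : litset (xatom A)) : (forall x, Z1 x <-> Z2 x) ->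
  forall x, strip O Z1 x <-> strip O Z2 x.
Proof. intros H x; unfold strip; rewrite H; tauto. Qed.

Lemma E_ext {A} O (X1 X2 : litset A) : (forall l, X1 l <-> X2 l) -> forall x, E O X1 x <-> E O X2 x.
Proof.
  intros H x; destruct x as [[a|l|w S0|w S0]|[a|l|w S0|w S0]]; simpl.
  - apply H.
  - specialize (H l); tauto.
  - rewrite (wsum_ext X1 X2 S0 H); tauto.
  - rewrite (wsum_ext X1 X2 S0 H); tauto.
  - apply H.
  - tauto.
  - tauto.
  - tauto.
Qed.

Theorem theorem2 (A : Type) (O : wprogram A) (Hw : nonneg_weights O) :
  (forall Z, answer_set (nn O) Z ->
     exists X, w_answer_set O X /\ forall x, strip O Z x <-> embed X x) /\
  (forall X, w_answer_set O X ->
     exists Z, answer_set (nn O) Z /\ forall x, strip O Z x <-> embed X x) /\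
  (forall Z1 Z2, answer_set (nn O) Z1 -> answer_set (nn O) Z2 ->
     (forall x, strip O Z1 x <-> strip O Z2 x) -> forall x, Z1 x <-> Z2 x).
Proof.
  split; [|split].
  - intros Z HA. exists (XZ Z). split; [apply ans_to_w; auto|].
    intros x. rewrite (strip_ext O _ _ (ans_char O Hw Z HA)). apply strip_E.
  - intros X HW. exists (E O X). split; [apply w_to_ans; auto|]. apply strip_E.
  - intros Z1 Z2 H1 H2 Hs.
    assert (HX : forall l, XZ Z1 l <-> XZ Z2 l).
    { intros l. unfold XZ.
      assert (Hn : forall Z : litset (xatom A), strip O Z (liftl l) <-> Z (liftl l)).
      { intros Z; unfold strip; split; [tauto|]. intros H; split; auto.
        intros [q [[Hq _] He]]. destruct l; simpl in He; [injection He as <-; eapply Hq; eauto|discriminate]. }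
      split; intro Hx; apply Hn; apply Hs; apply Hn; exact Hx. }
    intros x. rewrite (ans_char O Hw Z1 H1), (ans_char O Hw Z2 H2). apply E_ext; auto.
Qed.
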